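(* Let $\lambda=(\lambda_1,\ldots,\lambda_n)\in\mathbb{R}_{<0}^n$ have pairwise distinct entries, and let $\lambda_{\neg\max}$ be the $(n-1)$-tuple obtained from $\lambda$ by removing its maximal entry. Then for each $k=1,\ldots,n-1$, $$\lim_{t\to\infty}\frac{\nu_{k-1,\lambda}(t)}{\nu_{k,\lambda}(t)}=\frac{\kappa_{k-1,\lambda_{\neg\max}}}{\kappa_{k,\lambda_{\neg\max}}}.$$
   Context: $V_\lambda$ is the $n\times n$ Vandermonde matrix with $(i,j)$ entry $\lambda_j^{i-1}$, and $[\nu_{0,\lambda}(t),\ldots,\nu_{n-1,\lambda}(t)]=[e^{\lambda_1 t},\ldots,e^{\lambda_n t}]V_\lambda^{-1}$. For a tuple $\mu=(\mu_1,\ldots,\mu_p)$, the companion coefficients $\kappa_{k,\mu}$ ($0\le k\le p$) are defined by $\prod_{j=1}^p(s-\mu_j)=\sum_{k=0}^p\kappa_{k,\mu}s^k$. *)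

(* Defs.v *)
From HB Require Import structures.
From mathcomp Require Import all_boot all_order all_algebra.
From mathcomp Require Import all_classical all_reals all_analysis.
Set Implicit Arguments. Unset Strict Implicit. Unset Printing Implicit Defensive.
Import Order.TTheory GRing.Theory Num.Theory.
Local Open Scope ring_scope.

(* V_lambda: the n x n Vandermonde matrix, (i,j) entry lambda_j^(i) (0-based) *)
Definition Vmat (R : realType) (n : nat) (lam : 'rV[R]_n) : 'M[R]_n :=
  Vandermonde n lam.

Definition nu (R : realType) (n : nat) (lam : 'rV[R]_n) (t : R) : 'rV[R]_n :=
  (\row_(j < n) expR (lam 0 j * t)) *m invmx (Vmat lam).

(* prod_{j <> jm} (s - lam_j): the polynomial whose coefficients are
   kappa_{k, lam_{not max}} when jm is the index of the maximal entry *)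
Definition kappa_poly (R : realType) (n : nat) (lam : 'rV[R]_n) (jm : 'I_n)
  : {poly R} := \prod_(j < n | j != jm) ('X - (lam 0 j)%:P).

(* Main.v *)
Require Import Defs.
From HB Require Import structures.
From mathcomp Require Import all_boot all_order all_algebra.
From mathcomp Require Import all_classical all_reals all_analysis.
From mathcomp Require Import ring.
Import Order.TTheory GRing.Theory Num.Theory.
Import numFieldNormedType.Exports.
Local Open Scope classical_set_scope.
Local Open Scope ring_scope.

Lemma prodX_coef_pos (R : realDomainType) (I : Type) (r : seq I) (P : pred I)
  (f : I -> R) : (forall j, P j -> f j < 0) -> forall i,
  0 <= (\prod_(j <- r | P j) ('X - (f j)%:P))`_i /\
  ((i <= count P r)%N -> 0 < (\prod_(j <- r | P j) ('X - (f j)%:P))`_i).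
Proof.
move=> hf; elim: r => [|a r IH] i.
  rewrite big_nil coefC /=; case: i => [|i] //=; split => //; exact: ler01.
rewrite big_cons /=; case: ifP => Pa; last by rewrite add0n; exact: IH.
set p := \prod_(j <- r | P j) ('X - (f j)%:P).
rewrite mulrBl coefB coefXM coefCM -mulNr.
have hfa : 0 < - f a by rewrite oppr_gt0; exact: hf.
have [h0 h1] := IH i.
have h2 : 0 <= - f a * p`_i by apply: mulr_ge0 => //; exact: ltW.
case: i h0 h1 h2 => [|i] h0 h1 h2 /=.
  rewrite add0r; split => // _; apply: mulr_gt0 => //; exact: h1.
have [h3 h4] := IH i.
split; first exact: addr_ge0.
move=> hi; have h5 : 0 < p`_i by apply: h4; move: hi; rewrite ?add1n ltnS.
by have := ltr_leD h5 h2; rewrite addr0.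
Qed.

Lemma exp_to0 (R : realType) (a : R) : a < 0 ->
  expR (a * t) @[t --> +oo] --> 0.
Proof.
move=> ha.
rewrite (_ : (fun t => expR (a * t)) =
   (fun z => expR (- z)) \o (fun z => (- a) * z)); last first.
  by apply: funext => z /=; rewrite mulNr opprK.
apply: (@cvg_comp _ _ _ _ _ _ (pinfty_nbhs R)); last exact: cvgr_expR.
by apply: gt0_cvgMry; rewrite ?oppr_gt0.
Qed.

Lemma cvg_sum0 (R : realType) (I : Type) (r : seq I) (P : pred I)
  (f : I -> R -> R) : (forall i, P i -> f i t @[t --> +oo] --> 0) ->
  \sum_(i <- r | P i) f i t @[t --> +oo] --> 0.
Proof.
move=> hf; elim: r => [|a r IH].
  have -> : (fun t => \sum_(i <- [::] | P i) f i t) = (fun=> 0).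
    by apply: funext => t; rewrite big_nil.
  exact: cvg_cst.
have [Pa|nPa] := boolP (P a).
  have -> : (fun t => \sum_(i <- a :: r | P i) f i t) =
      (fun t => f a t + \sum_(i <- r | P i) f i t).
    by apply: funext => t; rewrite big_cons Pa.
  rewrite -[X in _ --> X]addr0; exact: (cvgD (hf a Pa) IH).
have -> : (fun t => \sum_(i <- a :: r | P i) f i t) =
    (fun t => \sum_(i <- r | P i) f i t).
  by apply: funext => t; rewrite big_cons (negbTE nPa).
exact: IH.
Qed.

Theorem proposition8 (R : realType) (n : nat) (lam : 'rV[R]_n)
  (hneg : forall j, lam 0 j < 0)
  (hdist : forall i j, i != j -> lam 0 i != lam 0 j)
  (jm : 'I_n) (hmax : forall j, lam 0 j <= lam 0 jm)
  (k k' : 'I_n) (hk : val k = (val k').+1) :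
  (fun t : R => nu lam t 0 k' / nu lam t 0 k) @ +oo -->
    (kappa_poly lam jm)`_k' / (kappa_poly lam jm)`_k.
Proof.
set V := Vmat lam.
set W := invmx V.
have hV : V \in unitmx.
  rewrite unitmxE unitfE /V /Vmat det_Vandermonde.
  apply/prodf_neq0 => i _; apply/prodf_neq0 => j hij.
  rewrite subr_eq0; apply: hdist; by rewrite eq_sym neq_ltn hij.
have hWV : W *m V = 1%:M by exact: mulVmx.
have hrow : forall j, \sum_(i < n) W jm i * lam 0 j ^+ i = (jm == j)%:R.
  move=> j; have /matrixP/(_ jm j) := hWV; rewrite !mxE => <-.
  by apply: eq_bigr => i _; rewrite /V /Vmat /Vandermonde mxE.
set g := fun (i : 'I_n) (t : R) =>
  \sum_j expR ((lam 0 j - lam 0 jm) * t) * W j i.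
have hg : forall i t, nu lam t 0 i = expR (lam 0 jm * t) * g i t.
  move=> i t; rewrite /nu !mxE /g mulr_sumr; apply: eq_bigr => j _.
  rewrite mxE mulrA -expRD; congr (expR _ * _); ring.
have hglim : forall i, g i t @[t --> +oo] --> W jm i.
  move=> i.
  have -> : g i = fun t => W jm i +
      \sum_(j | j != jm) expR ((lam 0 j - lam 0 jm) * t) * W j i.
    apply: funext => t; rewrite /g (bigD1 jm) //= subrr mul0r expR0 mul1r.
    done.
  rewrite -[X in _ --> X]addr0; apply: cvgD; first exact: cvg_cst.
  apply: cvg_sum0 => j hj; rewrite -(mul0r (W j i)).
  apply: cvgMr_tmp; apply: exp_to0.
  by rewrite lt_neqAle subr_le0 hmax andbT subr_eq0 hdist.
set kp := kappa_poly lam jm.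
have hkpm : kp.[lam 0 jm] != 0.
  rewrite /kp /kappa_poly horner_prod; apply/prodf_neq0 => j hj.
  by rewrite hornerXsubC subr_eq0 hdist // eq_sym.
set c := (kp.[lam 0 jm])^-1.
have hcnt : count (fun j => j != jm) (index_enum 'I_n) = n.-1.
  have := count_predC (fun j => j != jm) (index_enum 'I_n).
  have -> : count (predC (fun j => j != jm)) (index_enum 'I_n) = 1%N.
    rewrite (eq_count (a2 := pred1 jm)); last by move=> x /=; rewrite negbK.
    by rewrite count_uniq_mem ?index_enum_uniq ?mem_index_enum.
  have hs : size (index_enum 'I_n) = n.
    by rewrite [index_enum _]unlock -enumT; exact: size_enum_ord.
  rewrite hs; move: (count _ _) => m Hm; by rewrite -Hm addn1.
have n0 : (0 < n)%N by apply: leq_ltn_trans (ltn_ord jm).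
have hszkp : size kp = n.
  rewrite /kp /kappa_poly -big_filter size_prod_XsubC size_filter hcnt.
  by rewrite prednK.
have hq : forall i : 'I_n, W jm i = c * kp`_i.
  set q := \poly_(i < n) W jm (insubd jm i).
  suff e : q = c *: kp by move=> i; rewrite -coefZ -e coef_poly ltn_ord valKd.
  apply/eqP; rewrite -subr_eq0; apply/negPn/negP => hne.
  have hroots : all (root (q - c *: kp)) [seq lam 0 j | j <- enum 'I_n].
    apply/allP => x /mapP [j _ ->]; rewrite rootE hornerD hornerN hornerZ.
    rewrite horner_poly (eq_bigr (fun i : 'I_n => W jm i * lam 0 j ^+ i)); last by move=> i _; rewrite valKd.
    have [ej|nej] := eqVneq jm j.
      by rewrite hrow -ej eqxx /c mulVf // subrr.
    have -> : kp.[lam 0 j] = 0.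
      rewrite /kp /kappa_poly horner_prod (bigD1 j) /=; last by rewrite eq_sym.
      by rewrite hornerXsubC subrr mul0r.
    by rewrite hrow (negbTE nej) mulr0 subrr.
  have huniq : uniq [seq lam 0 j | j <- enum 'I_n].
    rewrite map_inj_uniq ?enum_uniq // => i j hij.
    by case: (eqVneq i j) => // /hdist; rewrite hij eqxx.
  have := max_poly_roots hne hroots huniq.
  rewrite size_map size_enum_ord.
  have hsz : (size (q - c *: kp)%R <= n)%N.
    apply: leq_trans (size_polyD _ _) _; rewrite geq_max size_poly /=.
    by rewrite size_polyN; apply: leq_trans (size_scale_leq _ _) _; rewrite hszkp.
  by move=> H; have := leq_trans H hsz; rewrite ltnn.
have hpos : 0 < kp`_k.
  have [_ H] := @prodX_coef_pos R 'I_n (index_enum 'I_n) (fun j => j != jm)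
    (fun j => lam 0 j) (fun j _ => hneg j) k.
  apply: H; rewrite hcnt -ltnS prednK //.
have hc : c != 0 by rewrite invr_eq0.
have -> : kp`_k' / kp`_k = W jm k' / W jm k.
  by rewrite !hq invfM mulrACA mulfV // mul1r.
have -> : (fun t => nu lam t 0 k' / nu lam t 0 k) = fun t => g k' t / g k t.
  apply: funext => t; rewrite !hg invfM mulrACA mulfV ?mul1r //.
  by rewrite gt_eqF // expR_gt0.
apply: cvgM; first exact: hglim.
apply: cvgV; last exact: hglim.
by rewrite hq mulf_neq0 // gt_eqF.
Qed.
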